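(* For every $k\geq 0$, the polynomial $H_k(x)$ is symmetric: for all integers $m$, the coefficient of $x^m$ in $H_k(x)$ equals the coefficient of $x^{2(k+1)(k+2)-1-m}$. Equivalently, writing $h_k(i,j)$ for the coefficient of $x^{2(k+1)i+j}$, one has $h_k(i,j)=h_k(k+1-i,\,2k+1-j)$ for $0\le i\le k+1$, $0\le j\le 2k+1$.
   Context: $B_n(y)=\sum_{\pi\in B_n}y^{\mathrm{des}_B(\pi)}$ is the type $B$ Eulerian polynomial: $B_n$ is the set of signed permutations $\pi_1\cdots\pi_n$ of $[n]$, and with $\pi_0=0$, $\mathrm{des}_B(\pi)$ counts $i\in\{0,\dots,n-1\}$ with $\pi_i>\pi_{i+1}$; $B_0=1$. Define \[H_k(x)=\sum_{l=0}^{k}B_{k-l}(x^{2k+2})(x^{2k+2}-1)^l\sum_{s=l}^{k}\binom{s}{l}x^{2k+1-s}+\sum_{l=0}^{k}B_{k-l}(x^{-2k-2})(x^{-2k-2}-1)^l\sum_{s=l}^{k}\binom{s}{l}x^{2(k+1)^2+s}.\] *)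

(* Defs.v *)
From HB Require Import structures.
From mathcomp Require Import all_boot all_order all_algebra all_fingroup.
From mathcomp Require Import fraction.
Set Implicit Arguments. Unset Strict Implicit. Unset Printing Implicit Defensive.
Import Order.TTheory GRing.Theory Num.Theory.
Local Open Scope ring_scope.

Notation tofracP x := (@FracField.tofrac {poly int} x).

(* A signed permutation of [n] is a pair (s, e) with s : 'S_n and a sign
   vector e; its one-line entry at position i+1 (i : 'I_n) is
   pi_{i+1} = -(s i + 1) if e i, else s i + 1. *)
Definition spval (n : nat) (s : 'S_n) (e : {ffun 'I_n -> bool}) (i : 'I_n) : int :=
  if e i then - ((s i).+1 %:Z) else (s i).+1 %:Z.

Definition spat (n : nat) (s : 'S_n) (e : {ffun 'I_n -> bool}) (j : nat) : int :=
  if j is j'.+1 then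
    (if @insub _ (fun i => i < n)%N 'I_n j' is Some i then spval s e i else 0)
  else 0.

Definition desB (n : nat) (s : 'S_n) (e : {ffun 'I_n -> bool}) : nat :=
  (\sum_(j < n) (spat s e j.+1 < spat s e j)%R)%N.

Definition Bpoly (n : nat) : {poly int} :=
  \sum_(s : 'S_n) \sum_(e : {ffun 'I_n -> bool}) 'X^(desB s e).

(* H_k(x), computed in the field of rational functions {fraction {poly int}}
   (it involves x^{-1}); it turns out to be a polynomial. *)
Definition Hk (k : nat) : {fraction {poly int}} :=
  let X : {fraction {poly int}} := tofracP 'X in
  let N := (2 * k + 2)%N in
  \sum_(l < k.+1)
     (map_poly (fun c : int => tofracP c%:P) (Bpoly (k - l))).[X ^+ N]
     * (X ^+ N - 1) ^+ l
     * \sum_(l <= s < k.+1) ('C(s, l))%:R * X ^+ (2 * k + 1 - s)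
  + \sum_(l < k.+1)
     (map_poly (fun c : int => tofracP c%:P) (Bpoly (k - l))).[X ^- N]
     * (X ^- N - 1) ^+ l
     * \sum_(l <= s < k.+1) ('C(s, l))%:R * X ^+ (2 * (k + 1) ^ 2 + s).

Definition coefz (p : {poly int}) (m : int) : int :=
  match m with Posz n => p`_n | Negz _ => 0 end.

(* Main.v *)
Require Import Defs.
From HB Require Import structures.
From mathcomp Require Import all_boot all_order all_algebra all_fingroup.
From mathcomp Require Import fraction.
From mathcomp Require Import zify.
Import Order.TTheory GRing.Theory Num.Theory.
Local Open Scope ring_scope.

Notation K := {fraction {poly int}}.
Definition f0 := (@FracField.tofrac {poly int} \o @polyC int).
Lemma cf (y : K) : commr_rmorph f0 y. Proof. by move=> a; rewrite /GRing.comm mulrC. Qed.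
Notation psi y := (horner_morph (cf y)).
Definition Xf : K := tofracP 'X.

Definition bnd (d : nat) (p : {poly int}) := (size p <= d.+1)%N.

Lemma bndW a b p : (a <= b)%N -> bnd a p -> bnd b p.
Proof. rewrite /bnd => h1 h2; apply: leq_trans h2 _; by []. Qed.

Lemma bndM a b p q : bnd a p -> bnd b q -> bnd (a + b) (p * q).
Proof.
rewrite /bnd => hp hq; apply: leq_trans (size_polyMleq p q) _; lia.
Qed.

Lemma bndD a p q : bnd a p -> bnd a q -> bnd a (p + q).
Proof. rewrite /bnd => hp hq; apply: leq_trans (size_polyD p q) _; by rewrite geq_max hp hq. Qed.

Lemma bndS (I : Type) (r : seq I) (P : pred I) a (F : I -> {poly int}) :
  (forall i, P i -> bnd a (F i)) -> bnd a (\sum_(i <- r | P i) F i).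
Proof.
move=> h; apply: (big_ind (bnd a)) => //; first by rewrite /bnd size_poly0.
exact: bndD.
Qed.

Lemma bndX a p l : bnd a p -> bnd (a * l) (p ^+ l).
Proof.
rewrite /bnd => hp; apply: leq_trans (size_poly_exp_leq p l) _.
rewrite ltnS leq_mul2r; apply/orP; right; lia.
Qed.

Lemma bndB n : bnd n (Bpoly n).
Proof.
apply/leq_sizeP => j hj; rewrite /Bpoly coef_sum; apply: big1 => s _.
rewrite coef_sum; apply: big1 => e _; rewrite coefXn.
have : (desB s e <= n)%N.
  rewrite /desB; apply: (@leq_trans (\sum_(j < n) 1)%N).
    by apply: leq_sum => t _; exact: leq_b1.
  by rewrite sum_nat_const card_ord muln1.
move=> hd; case: eqP => // hjd; lia.
Qed.

Lemma psi_expand y n (q : {poly int}) : (size q <= n)%N ->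
  psi y q = \sum_(i < n) tofracP (q`_i)%:P * y ^+ i.
Proof.
move=> hq.
have E : q = \sum_(i < n) (q`_i)%:P * 'X^i.
  rewrite -[LHS](_ : \poly_(i < n) q`_i = q); last first.
    apply/polyP => i; rewrite coef_poly; case: ltnP => // hi.
    by apply/esym/(leq_sizeP _ _ hq).
  by rewrite poly_def; apply: eq_bigr => i _; rewrite mul_polyC.
rewrite {1}E rmorph_sum; apply: eq_bigr => i _.
rewrite rmorphM rmorphXn /=. rewrite (horner_morphC (cf y)) (horner_morphX (cf y)). done.
Qed.

Lemma tofrac_expand n (q : {poly int}) : (size q <= n)%N ->
  tofracP q = \sum_(i < n) tofracP (q`_i)%:P * Xf ^+ i.
Proof.
move=> hq.
have E : q = \sum_(i < n) (q`_i)%:P * 'X^i.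
  rewrite -[LHS](_ : \poly_(i < n) q`_i = q); last first.
    apply/polyP => i; rewrite coef_poly; case: ltnP => // hi.
    by apply/esym/(leq_sizeP _ _ hq).
  by rewrite poly_def; apply: eq_bigr => i _; rewrite mul_polyC.
rewrite {1}E rmorph_sum; apply: eq_bigr => i _.
by rewrite rmorphM rmorphXn.
Qed.

Lemma psi_tofrac q : psi Xf q = tofracP q.
Proof. by rewrite (psi_expand _ _ _ (leqnn _)) (tofrac_expand _ _ (leqnn _)). Qed.

Lemma Xf_neq0 : Xf != 0.
Proof. by rewrite /Xf tofrac_eq0 polyX_eq0. Qed.

Definition revp n (q : {poly int}) := \poly_(i < n.+1) q`_(n - i).

Lemma tofrac_revp n (q : {poly int}) : (size q <= n.+1)%N ->
  tofracP (revp n q) = Xf ^+ n * psi Xf^-1 q.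
Proof.
move=> hq; rewrite (psi_expand _ _ _ hq) (tofrac_expand n.+1); last first.
  by rewrite /revp; apply: size_poly.
rewrite mulr_sumr (reindex_inj rev_ord_inj) /=; apply: eq_bigr => i _.
have hi : (i <= n)%N by rewrite -ltnS.
rewrite /revp coef_poly subSS ifT; last by lia.
have -> : (n - (n - i) = i)%N by lia.
rewrite mulrCA; congr (_ * _).
have e : Xf ^+ n = Xf ^+ (n - i) * Xf ^+ i by rewrite -exprD subnK.
rewrite exprVn e mulfK //; exact: expf_neq0 Xf_neq0.
Qed.
Lemma sym_gen D (F : {poly int}) : (size F <= D.+1)%N ->
  forall m : int, coefz (F + revp D F) m = coefz (F + revp D F) (D.+1%:Z - 1 - m).
Proof.
move=> hF.
have cp j : (F + revp D F)`_j = F`_j + (if (j < D.+1)%N then F`_(D - j) else 0).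
  by rewrite coefD /revp coef_poly.
have Fz j : (D < j)%N -> F`_j = 0 by move=> hj; apply: (leq_sizeP _ _ hF).
case=> [n|n]; case E: (D.+1%:Z - 1 - _) => [j|j] /=.
- rewrite !cp.
  have hn : (n <= D)%N by lia.
  have hj : j = (D - n)%N by lia.
  rewrite hj !ifT; try lia.
  have -> : (D - (D - n) = n)%N by lia.
  by rewrite addrC.
- rewrite cp ifF; last by lia.
  by rewrite Fz ?addr0 //; lia.
- rewrite cp ifF; last by lia.
  by rewrite Fz ?addr0 //; lia.
- by [].
Qed.

Lemma psiXn (y : K) n : psi y ('X^n : {poly int}) = y ^+ n.
Proof. by rewrite rmorphXn /= (horner_morphX (cf y)). Qed.

Definition Sl k (l : nat) : {poly int} :=
  \sum_(l <= s < k.+1) ('C(s, l))%:R * 'X^(2 * k + 1 - s).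
Definition Fk k : {poly int} :=
  \sum_(l < k.+1) (Bpoly (k - l) \Po 'X^(2 * k + 2)) * ('X^(2 * k + 2) - 1) ^+ l * Sl k l.
Definition T k (y : K) : K :=
  \sum_(l < k.+1)
     (map_poly (fun c : int => tofracP c%:P) (Bpoly (k - l))).[y ^+ (2 * k + 2)]
     * (y ^+ (2 * k + 2) - 1) ^+ l
     * \sum_(l <= s < k.+1) ('C(s, l))%:R * y ^+ (2 * k + 1 - s).

Lemma psiF k y : psi y (Fk k) = T k y.
Proof.
rewrite /Fk /T rmorph_sum; apply: eq_bigr => l _.
rewrite !rmorphM rmorphXn rmorphB rmorph1 rmorphXn /= (horner_morphX (cf y)).
congr (_ * _ * _).
  rewrite /comp_poly -horner_map /= -map_poly_comp.
  have -> : psi y 'X^(2 * k + 2) = y ^+ (2 * k + 2).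
    exact: psiXn.
  congr (_.[_]); apply: eq_map_poly => c /=.
  by rewrite (horner_morphC (cf y)).
rewrite /Sl rmorph_sum; apply: eq_bigr => s _.
rewrite rmorphM rmorph_nat /=; congr (_ * _); exact: psiXn.
Qed.

Lemma Hk_eq k : Hk k = T k Xf + Xf ^+ (2 * (k + 1) * (k + 2)).-1 * T k Xf^-1.
Proof.
rewrite /Hk /T; congr (_ + _).
rewrite mulr_sumr; apply: eq_bigr => l _.
rewrite !exprVn [RHS]mulrCA; congr (_ * _).
rewrite mulr_sumr; apply: eq_big_nat => s /andP[_ hs].
rewrite [RHS]mulrCA; congr (_ * _).
rewrite exprVn.
have e : Xf ^+ (2 * (k + 1) * (k + 2)).-1
         = Xf ^+ (2 * (k + 1) ^ 2 + s) * Xf ^+ (2 * k + 1 - s).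
  rewrite -exprD; congr (_ ^+ _); rewrite !expnS expn0; nia.
rewrite e mulfK //; exact: expf_neq0 Xf_neq0.
Qed.

Lemma bndF k : bnd (2 * (k + 1) * (k + 2)).-1 (Fk k).
Proof.
apply: bndS => l _.
have hl := ltn_ord l.
apply: (@bndW ((k - l) * (2 * k + 2) + (2 * k + 2) * l + (2 * k + 1))); first by nia.
apply: bndM; [apply: bndM|].
- rewrite /bnd; apply: leq_trans (size_comp_poly_leq _ _) _.
  rewrite size_polyXn /= ltnS; apply: leq_mul => //.
  have := bndB (k - l); rewrite /bnd; move: (size (Bpoly (k - l))) => z; lia.
- apply: bndX; rewrite /bnd size_Xn_sub_1 //; lia.
- rewrite /Sl; apply: bndS => s _; apply/leq_sizeP => j hj.
  rewrite mulr_natl coefMn coefXn.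
  have -> : (j == 2 * k + 1 - s)%N = false by apply/eqP; lia.
  by rewrite mul0rn.
Qed.

Theorem corollary3p3 (k : nat) :
  exists p : {poly int},
    Hk k = tofracP p /\
    forall m : int,
      coefz p m = coefz p ((2 * (k + 1) * (k + 2))%N%:Z - 1 - m).
Proof.
exists (Fk k + revp (2 * (k + 1) * (k + 2)).-1 (Fk k)); split.
  by rewrite Hk_eq rmorphD /= (tofrac_revp _ _ (bndF k)) -!psiF psi_tofrac.
move=> m; have := sym_gen _ _ (bndF k) m.
by rewrite prednK //; nia.
Qed.
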